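(* In the two-superobserver, two-friend extended Wigner's friend scenario (defined in the context), there exists a superobserver possibility set $S \subseteq \{0,1\}^2\times\{1,2\}^2$ that satisfies Possibilistic No-Signalling but admits no Possibilistic Local Friendliness model. That is, there is no set $T\subseteq\{0,1\}^4\times\{1,2\}^2$ that is a Possibilistic Local Friendliness model reproducing $S$.
   Context: Scenario. Two space-like separated superobservers, Alice and Bob, have friends Charlie and Debbie respectively. Each friend measures a system inside a sealed laboratory. - Charlie and Debbie record outcomes $C=c\in\{0,1\}$ and $D=d\in\{0,1\}$. - Alice chooses an intervention (setting) $X=x\in\{1,2\}$ and observes $A=a\in\{0,1\}$. Bob chooses $Y=y\in\{1,2\}$ and observes $B=b\in\{0,1\}$. - The setting $X=1$ means Alice opens Charlie's lab, asks for his result and sets $A=C$. The setting $Y=1$ means Bob asks Debbie and sets $B=D$. The settings $X=2$ and $Y=2$ are arbitrary other measurements. - Spacetime relations: $A$ lies in the future light cone of $X$, and $B$ lies in the future light cone of $Y$. $X$ is not in the past light cone of any of $B,Y,C,D$. $Y$ is not in the past light cone of any of $A,X,C,D$. Superobserver possibility set. This is a set $S$ of tuples $(a,b,x,y)$; its elements are the tuples called possible. $S$ satisfies Possibilistic No-Signalling (PNS) when both of the following hold: - For all $x,a$, whether some $b$ has $(a,b,x,y)\in S$ does not depend on $y$. - For all $y,b$, whether some $a$ has $(a,b,x,y)\in S$ does not depend on $x$. Possibilistic Local Friendliness (PLF) model. This is the conjunction of Absoluteness of Observed Events and Possibilistic Local Agency, formalized as follows. - Absoluteness of Observed Events (AOE):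 every observed event has a single absolute value. Accordingly, the model is a set $T$ of possible joint value assignments $(a,b,c,d,x,y)$ to all six variables. - Protocol constraint: every $t\in T$ with $x=1$ has $a=c$, and every $t\in T$ with $y=1$ has $b=d$. - A partial assignment $E$ (values for some subset of the variables) is called possible if it agrees with some element of $T$. - Possibilistic Local Agency (PLA): if $E$ is possible, then for any intervention $Z\in\{X,Y\}$ not in the past light cone of any variable assigned in $E$, and for every value $z$ of $Z$, the assignment $E$ together with $Z=z$ is possible. - Reproducing $S$: the projection of $T$ onto the coordinates $(a,b,x,y)$ equals $S$. *)

(* Defs.v *)
(* Outcomes a,b,c,d in {0,1} are encoded as bool (false = 0, true = 1).
   Settings x,y in {1,2} are encoded by the type [setting]. *)
Inductive setting : Type := s1 | s2.

Definition superobs_set := bool -> bool -> setting -> setting -> Prop.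

(* A model under AOE: a set of joint assignments (a,b,c,d,x,y). *)
Definition joint_set := bool -> bool -> bool -> bool -> setting -> setting -> Prop.

Definition PNS (S : superobs_set) : Prop :=
  (forall x a y y', (exists b, S a b x y) <-> (exists b, S a b x y')) /\
  (forall y b x x', (exists a, S a b x y) <-> (exists a, S a b x' y)).

Inductive var : Type := VA | VB | VC | VD | VX | VY.
Inductive intervention : Type := IX | IY.

(* From the scenario: X is in the past light cone of A (A is in the future
   light cone of X) and not of B,Y,C,D; Y is in the past light cone of B and
   not of A,X,C,D.  Each intervention is counted in its own past light cone
   (so PLA never re-assigns an already assigned intervention). *)
Definition in_past_LC (Z : intervention) (v : var) : Prop :=
  match Z, v with
  | IX, VA | IX, VX => True
  | IY, VB | IY, VY => True
  | _, _ => False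
  end.

Record passign : Type := PAssign {
  eA : option bool; eB : option bool; eC : option bool; eD : option bool;
  eX : option setting; eY : option setting }.

Definition assigned (E : passign) (v : var) : Prop :=
  match v with
  | VA => eA E <> None | VB => eB E <> None
  | VC => eC E <> None | VD => eD E <> None
  | VX => eX E <> None | VY => eY E <> None
  end.

Definition opt_agree {V : Type} (o : option V) (v : V) : Prop :=
  match o with None => True | Some w => w = v end.

Definition agrees (E : passign) a b c d x y : Prop :=
  opt_agree (eA E) a /\ opt_agree (eB E) b /\ opt_agree (eC E) c /\
  opt_agree (eD E) d /\ opt_agree (eX E) x /\ opt_agree (eY E) y.

Definition possible (T : joint_set) (E : passign) : Prop :=
  exists a b c d x y, T a b c d x y /\ agrees E a b c d x y.

Definition set_int (E : passign) (Z : intervention) (z : setting) : passign :=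
  match Z with
  | IX => PAssign (eA E) (eB E) (eC E) (eD E) (Some z) (eY E)
  | IY => PAssign (eA E) (eB E) (eC E) (eD E) (eX E) (Some z)
  end.

Definition PLA (T : joint_set) : Prop :=
  forall (E : passign) (Z : intervention),
    possible T E ->
    (forall v, assigned E v -> ~ in_past_LC Z v) ->
    forall z, possible T (set_int E Z z).

Definition protocol (T : joint_set) : Prop :=
  forall a b c d x y, T a b c d x y ->
    (x = s1 -> a = c) /\ (y = s1 -> b = d).

(* PLF model (AOE is built into the type of T). *)
Definition PLF_model (T : joint_set) : Prop := protocol T /\ PLA T.

Definition reproduces (T : joint_set) (S : superobs_set) : Prop :=
  forall a b x y, S a b x y <-> exists c d, T a b c d x y.

(* Main.v *)
Require Import Defs.

Definition S0 : superobs_set := fun a b x y =>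
  xorb a b = match x, y with s2, s2 => true | _, _ => false end.

Ltac poss_destr H :=
  let a := fresh "a" in let b := fresh "b" in let c := fresh "c" in
  let d := fresh "d" in let x := fresh "x" in let y := fresh "y" in
  let HT := fresh "HT" in let Hag := fresh "Hag" in
  destruct H as [a [b [c [d [x [y [HT Hag]]]]]]];
  unfold agrees in Hag; simpl in Hag;
  destruct Hag as [? [? [? [? [? ?]]]]]; subst.

Theorem theorem4 :
  exists S : superobs_set,
    PNS S /\ ~ (exists T : joint_set, PLF_model T /\ reproduces T S).
Proof.
  exists S0. split.
  - split.
    + intros x a y y'. split; intros _;
      [exists (xorb a (match x, y' with s2, s2 => true | _, _ => false end))
      |exists (xorb a (match x, y with s2, s2 => true | _, _ => false end))];
      unfold S0; destruct a, x, y, y'; reflexivity.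
    + intros y b x x'. split; intros _;
      [exists (xorb b (match x', y with s2, s2 => true | _, _ => false end))
      |exists (xorb b (match x, y with s2, s2 => true | _, _ => false end))];
      unfold S0; destruct b, x, y, x'; reflexivity.
  - intros [T [[Hprot Hpla] Hrep]].
    assert (H1 : S0 false false s1 s1) by reflexivity.
    apply Hrep in H1. destruct H1 as [c [d H1]].
    destruct (Hprot _ _ _ _ _ _ H1) as [Hc Hd].
    specialize (Hc eq_refl). specialize (Hd eq_refl). subst c d.
    assert (H2 : possible T (set_int (PAssign None None (Some false) (Some false) None (Some s1)) IX s2)).
    { apply Hpla.
      - exists false, false, false, false, s1, s1. split; [exact H1|].
        repeat split.
      - intros v Hv. destruct v; simpl in *; try tauto; congruence. }
    poss_destr H2.
    destruct (Hprot _ _ _ _ _ _ HT) as [_ Hb]. specialize (Hb eq_refl). subst.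
    assert (Ha : S0 a false s2 s1) by (apply Hrep; eauto).
    unfold S0 in Ha. destruct a; simpl in Ha; try discriminate.
    assert (H3 : possible T (set_int (PAssign (Some false) None (Some false) (Some false) (Some s2) None) IY s2)).
    { apply Hpla.
      - exists false, false, false, false, s2, s1. split; [exact HT|].
        repeat split.
      - intros v Hv. destruct v; simpl in *; try tauto; congruence. }
    poss_destr H3.
    assert (Hb : S0 false b s2 s2) by (apply Hrep; eauto).
    unfold S0 in Hb. destruct b; simpl in Hb; try discriminate.
    assert (H4 : possible T (set_int (PAssign None (Some true) (Some false) (Some false) None (Some s2)) IX s1)).
    { apply Hpla.
      - exists false, true, false, false, s2, s2. split; [exact HT0|].
        repeat split.
      - intros v Hv. destruct v; simpl in *; try tauto; congruence. }
    poss_destr H4.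
    destruct (Hprot _ _ _ _ _ _ HT1) as [Ha' _]. specialize (Ha' eq_refl). subst.
    assert (Hc : S0 false true s1 s2) by (apply Hrep; eauto).
    discriminate Hc.
Qed.
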